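(* Let $(B,\mathscr O)$ be a brace block with $B$ finite. Then for all $\circ,\star\in\mathscr O$, every Galois field extension $L/K$ whose Galois group is isomorphic to $(B,\circ)$ admits a Hopf–Galois structure of type $(B,\star)$.
   Context: A skew left brace is a triple $(B,\cdot,\circ)$ where $(B,\cdot),(B,\circ)$ are groups and $a\circ(b\cdot c)=(a\circ b)\cdot a^{-1}\cdot(a\circ c)$ for all $a,b,c\in B$, with $a^{-1}$ the inverse in $(B,\cdot)$. A brace block is a set $B$ with a collection $\mathscr O$ of binary operations on $B$ such that $(B,\circ,\star)$ is a skew left brace for every $\circ,\star\in\mathscr O$. For a finite Galois extension $L/K$ with group $\Gamma$, a Hopf–Galois structure of type $N$ is (by Greither–Pareigis) one arising as $L[N']^{\Gamma}$ from a regular subgroup $N'\le\operatorname{Perm}(\Gamma)$ isomorphic to $N$ and normalized by the left regular representation $\lambda(\Gamma)$; equivalently a $K$-Hopf algebra $H$ acting on $L$ making $L/K$ an $H$-Hopf–Galois extension with $L\otimes_K H\cong L[N]$. *)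

(* Defs.v *)
From HB Require Import structures.
From mathcomp Require Import all_boot all_algebra all_fingroup all_field.
Set Implicit Arguments. Unset Strict Implicit. Unset Printing Implicit Defensive.
Local Open Scope group_scope.

Definition is_identity (B : Type) (op : B -> B -> B) (e : B) : Prop :=
  forall x, op e x = x /\ op x e = x.

Definition is_group (B : Type) (op : B -> B -> B) : Prop :=
  (forall a b c, op a (op b c) = op (op a b) c) /\
  exists e, is_identity op e /\ forall a, exists a', op a a' = e /\ op a' a = e.

Definition is_inv (B : Type) (op : B -> B -> B) (a a' : B) : Prop :=
  exists e, is_identity op e /\ op a a' = e /\ op a' a = e.

Definition skew_brace (B : Type) (dot circ : B -> B -> B) : Prop :=
  is_group dot /\ is_group circ /\
  forall a b c a', is_inv dot a a' ->
    circ a (dot b c) = dot (dot (circ a b) a') (circ a c).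

Definition brace_block (B : Type) (O : (B -> B -> B) -> Prop) : Prop :=
  forall o s, O o -> O s -> skew_brace o s.

Definition op_isom (B : Type) (op : B -> B -> B) (gT : finGroupType)
    (f : B -> gT) (H : {set gT}) : Prop :=
  injective f /\ (forall b, f b \in H) /\ (forall h, h \in H -> exists b, f b = h) /\
  forall a b, f (op a b) = f a * f b.

Definition op_isog (B : Type) (op : B -> B -> B) (gT : finGroupType) (H : {set gT}) :=
  exists f : B -> gT, op_isom op f H.

Definition lreg (gT : finGroupType) (g : gT) : {perm gT} := perm (mulgI g).

Definition lambda_img (gT : finGroupType) : {set {perm gT}} := [set lreg g | g : gT].

Definition regular_perm (gT : finGroupType) (N : {group {perm gT}}) : Prop :=
  forall x y : gT, exists! n, n \in N /\ n x = y.

(* Hopf--Galois structure of type (B, star) on a Galois extension with Galois group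
   Gamma, via the Greither--Pareigis correspondence: a regular subgroup N of
   Perm(Gamma) isomorphic to (B, star) and normalized by lambda(Gamma). *)
Definition has_HGS_type (gT : finGroupType) (B : Type) (star : B -> B -> B) : Prop :=
  exists N : {group {perm gT}},
    [/\ regular_perm N, op_isog star (N : {set {perm gT}}) &
        lambda_img gT \subset 'N(N)].

(* For a Galois extension E/K inside a splitting field L, the Galois group is
   'Gal(E / K); Perm(Gamma) is taken on the finGroupType [subg 'Gal(E / K)]. *)
Definition galois_has_HGS_type (F0 : fieldType) (L : splittingFieldType F0)
    (K E : {subfield L}) (B : Type) (star : B -> B -> B) : Prop :=
  has_HGS_type (subg_of 'Gal(E / K)%G) star.

(* Main.v *)
Require Import Defs.
From HB Require Import structures.
From mathcomp Require Import all_boot all_algebra all_fingroup all_field.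
Set Implicit Arguments. Unset Strict Implicit. Unset Printing Implicit Defensive.
Local Open Scope group_scope.

Lemma main_hgs (B : finType) (dot circ : B -> B -> B) (gT : finGroupType)
  (phi : B -> gT) (psi : gT -> B) :
  skew_brace dot circ -> cancel phi psi -> cancel psi phi ->
  (forall a b, phi (circ a b) = phi a * phi b) -> has_HGS_type gT dot.
Proof.
move=> [[Dassoc [e [eid Dinv]]] [_ Hbr]] phiK psiK phiM.
have tinj a : injective (fun x => phi (dot (psi x) a)).
  move=> x y /= /(can_inj phiK) H.
  have [a' [h1 h2]] := Dinv a.
  apply: (can_inj psiK).
  by rewrite -[psi x](eid _).2 -[psi y](eid _).2 -h1 !Dassoc H.
pose tp a := perm (tinj a).
have tpE a x : tp a x = phi (dot (psi x) a) by rewrite permE.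
have tpM a b : tp (dot a b) = tp a * tp b.
  by apply/permP => x; rewrite permM !tpE phiK Dassoc.
have tpinj : injective tp.
  move=> a b H; have := congr1 (fun p : {perm gT} => psi (p (phi e))) H.
  by rewrite /= !tpE !phiK !(eid _).1.
pose Nset := [set tp a | a : B].
have gN : group_set Nset.
  apply/group_setP; split.
    apply/imsetP; exists e => //; apply/permP => x.
    by rewrite perm1 tpE (eid _).2 psiK.
  move=> _ _ /imsetP[a _ ->] /imsetP[b _ ->]; rewrite -tpM; exact: imset_f.
exists (Group gN); split.
- move=> x y.
  have [a' [h1 h2]] := Dinv (psi x).
  exists (tp (dot a' (psi y))); split.
    split; first exact: imset_f.
    by rewrite tpE Dassoc h1 (eid _).1 psiK.
  move=> n [/imsetP[b _ ->] H]; congr tp.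
  rewrite tpE in H; have H' := congr1 psi H; rewrite phiK in H'.
  by rewrite -H' Dassoc h2 (eid _).1.
- exists tp; split=> //; split; [|split=> //].
  + move=> b; exact: imset_f.
  + by move=> h /imsetP[b _ ->]; exists b.
- apply/subsetP => _ /imsetP[g _ ->].
  rewrite inE; apply/subsetP => _ /imsetP[_ /imsetP[a _ ->] ->].
  have [d [h1 h2]] := Dinv (psi g).
  have Hinv : is_inv dot (psi g) d by exists e.
  rewrite (_ : tp a ^ lreg g = tp (dot d (circ (psi g) a))); first exact: imset_f.
  apply/permP => y; rewrite conjgE !permM.
  set y' := (lreg g)^-1 y.
  have Hy : g * y' = y by rewrite /y' -{2}(permKV (lreg g) y) /lreg permE.
  rewrite tpE /lreg permE -{1}(psiK g) -phiM (Hbr _ _ _ _ Hinv).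
  have Hc : circ (psi g) (psi y') = psi y.
    by rewrite -[circ _ _]phiK phiM !psiK Hy.
  by rewrite Hc -Dassoc.
Qed.

Theorem proposition5p1 (B : finType) (O : (B -> B -> B) -> Prop) :
  brace_block O ->
  forall circ star : B -> B -> B, O circ -> O star ->
  forall (F0 : fieldType) (L : splittingFieldType F0) (K E : {subfield L}),
    (K <= E)%VS -> galois K E ->
    op_isog circ ('Gal(E / K))%g ->
    galois_has_HGS_type K E star.
Proof.
move=> bb circ star Oc Os F0 L K E _ _ [f [finj [fin [fsurj fM]]]].
have Hbr := bb star circ Os Oc.
pose G := 'Gal(E / K)%G.
pose phi b : subg_of G := subg G (f b).
have phiv b : val (phi b) = f b by rewrite subgK.
have ex x : exists b, phi b == x.
  have [b fb] := fsurj _ (subgP x); exists b; apply/eqP/val_inj.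
  by rewrite phiv fb.
pose psi x := xchoose (ex x).
have psiK : cancel psi phi by move=> x; apply/eqP; exact: (xchooseP (ex x)).
have phiinj : injective phi by move=> a b H; apply: finj; rewrite -!phiv H.
have phiK : cancel phi psi by move=> b; apply: phiinj; rewrite psiK.
apply: (main_hgs Hbr phiK psiK).
by move=> a b; apply: val_inj; rewrite /= !phiv fM.
Qed.
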